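(* Let $v$ be a nonzero vector of $\mathbb{F}_4^n$ and, for $1\le k\le n-1$, let $\tau_k$ be the number of self-orthogonal additive codes $C$ over $\mathbb{F}_4$ of length $n$ and dimension $k$ such that $v\in C^\perp\setminus C$. Then \[ \tau_k=2^k\prod_{i=1}^{k}\frac{2^{2(n-i)}-1}{2^i-1}; \] in particular $\tau_k$ does not depend on $v$.
   Context: $\mathbb{F}_4=\{0,1,\omega,\omega^2\}$ with $\omega^2=\omega+1$, $\bar x:=x^2$. Trace inner product $\langle u,v\rangle=\sum_{i}(u_i\bar v_i+\bar u_i v_i)\in\mathbb{F}_2$ on $\mathbb{F}_4^n$. An additive code of length $n$ is an $\mathbb{F}_2$-subspace of $\mathbb{F}_4^n$, with dimension meaning $\mathbb{F}_2$-dimension; $C^\perp$ is its dual under the trace inner product, and $C$ is self-orthogonal if $C\subseteq C^\perp$. *)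

(* Defs.v *)
From mathcomp Require Import all_boot all_order all_algebra.
Set Implicit Arguments. Unset Strict Implicit. Unset Printing Implicit Defensive.

(* F_4 = {0,1,w,w^2} with w^2 = w + 1.  An element (a,b) : bool * bool
   represents a + b*w  (a, b in F_2). *)
Definition F4 : finType := (bool * bool)%type.

Definition F4zero : F4 := (false, false).
Definition F4one  : F4 := (true, false).
Definition F4w    : F4 := (false, true).

Definition F4add (x y : F4) : F4 := (addb x.1 y.1, addb x.2 y.2).

(* (a + b w)(c + d w) = ac + (ad + bc) w + bd w^2 = (ac + bd) + (ad + bc + bd) w *)
Definition F4mul (x y : F4) : F4 :=
  (addb (x.1 && y.1) (x.2 && y.2),
   addb (addb (x.1 && y.2) (x.2 && y.1)) (x.2 && y.2)).

Definition F4bar (x : F4) : F4 := F4mul x x.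

Definition vec (n : nat) : finType := {ffun 'I_n -> F4}.

Definition vzero (n : nat) : vec n := [ffun _ => F4zero].
Definition vadd (n : nat) (u w : vec n) : vec n := [ffun i => F4add (u i) (w i)].

(* trace inner product <u,v> = sum_i (u_i \bar v_i + \bar u_i v_i), a value in F_2
   (computed in F_4, where it lies in the prime subfield {0,1}). *)
Definition trace_ip (n : nat) (u w : vec n) : F4 :=
  \big[F4add/F4zero]_(i < n)
     F4add (F4mul (u i) (F4bar (w i))) (F4mul (F4bar (u i)) (w i)).

(* additive code: an F_2-subspace of F_4^n, i.e. contains 0 and is closed
   under addition (over F_2 scalar multiplication is automatic). *)
Definition additive (n : nat) (C : {set vec n}) : bool :=
  (vzero n \in C) && [forall x in C, forall y in C, vadd x y \in C].

Definition F2dim_eq (n : nat) (C : {set vec n}) (k : nat) : bool :=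
  #|C| == 2 ^ k.

Definition dual (n : nat) (C : {set vec n}) : {set vec n} :=
  [set u | [forall c in C, trace_ip u c == F4zero]].

Definition self_orthogonal (n : nat) (C : {set vec n}) : bool :=
  C \subset dual C.

Definition tau (n : nat) (v : vec n) (k : nat) : nat :=
  #|[set C : {set vec n} | [&& additive C, F2dim_eq C k, self_orthogonal C,
                               v \in dual C & v \notin C]]|.

(* Main.v *)
Require Import Defs.
From mathcomp Require Import all_boot all_order all_algebra.
Import GRing.Theory.
Set Implicit Arguments. Unset Strict Implicit. Unset Printing Implicit Defensive.

Definition trF (x y : F4) : F4 := F4add (F4mul x (F4bar y)) (F4mul (F4bar x) y).
Definition tr (x y : F4) : bool := (trF x y).1.

Lemma trF2 x y : (trF x y).2 = false.
Proof. by case: x => [[] []]; case: y => [[] []]. Qed.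
Lemma tr_sym x y : tr x y = tr y x.
Proof. by case: x => [[] []]; case: y => [[] []]. Qed.
Lemma tr_xx x : tr x x = false.
Proof. by case: x => [[] []]. Qed.
Lemma tr_addl x x' y : tr (F4add x x') y = tr x y (+) tr x' y.
Proof. by case: x => [[] []]; case: x' => [[] []]; case: y => [[] []]. Qed.
Lemma tr_0l y : tr F4zero y = false.
Proof. by case: y => [[] []]. Qed.
Lemma tr_nondeg y : y != F4zero -> exists e, tr e y.
Proof.
case: y => [[] []] //= _.
- by exists F4w.
- by exists F4w.
- by exists F4one.
Qed.

Definition ipb n (u w : vec n) : bool := \big[addb/false]_(i < n) tr (u i) (w i).

Lemma trace_ipE n (u w : vec n) : trace_ip u w = (ipb u w, false).
Proof.
rewrite /trace_ip /ipb.
set S := \big[F4add/F4zero]_(i < n) _.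
have h1 : S.1 = \big[addb/false]_(i < n) tr (u i) (w i).
  by rewrite /S (big_morph (fun x : F4 => x.1) (id1 := false) (op1 := addb)).
have h2 : S.2 = \big[addb/false]_(i < n) false.
  by rewrite /S (big_morph (fun x : F4 => x.2) (id1 := false) (op1 := addb)) //; apply: eq_bigr => i _; apply: trF2.
rewrite big1 // in h2; rewrite -h1.
by case: S h2 h1 => a b /= ->.
Qed.

Lemma F4addC x y : F4add x y = F4add y x.
Proof. by case: x => [[] []]; case: y => [[] []]. Qed.
Lemma F4addA x y z : F4add x (F4add y z) = F4add (F4add x y) z.
Proof. by case: x => [[] []]; case: y => [[] []]; case: z => [[] []]. Qed.

Lemma vaddC n (x y : vec n) : vadd x y = vadd y x.
Proof. by apply/ffunP => i; rewrite !ffunE F4addC. Qed.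
Lemma vaddA n (x y z : vec n) : vadd x (vadd y z) = vadd (vadd x y) z.
Proof. by apply/ffunP => i; rewrite !ffunE F4addA. Qed.
Lemma vadd0 n (x : vec n) : vadd (vzero n) x = x.
Proof. by apply/ffunP => i; rewrite !ffunE; case: (x i) => [[] []]. Qed.
Lemma vaddxx n (x : vec n) : vadd x x = vzero n.
Proof. by apply/ffunP => i; rewrite !ffunE; case: (x i) => [[] []]. Qed.
Lemma vaddK n (x y : vec n) : vadd x (vadd x y) = y.
Proof. by rewrite vaddA vaddxx vadd0. Qed.
Lemma vadd_inj n (x : vec n) : injective (vadd x).
Proof. by move=> a b h; rewrite -(vaddK x a) h vaddK. Qed.

Lemma ipb_addl n (u u' w : vec n) : ipb (vadd u u') w = ipb u w (+) ipb u' w.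
Proof.
rewrite /ipb -big_split /=; apply: eq_bigr => i _.
by rewrite ffunE tr_addl.
Qed.
Lemma ipb_sym n (u w : vec n) : ipb u w = ipb w u.
Proof. by rewrite /ipb; apply: eq_bigr => i _; rewrite tr_sym. Qed.
Lemma ipb_addr n (u w w' : vec n) : ipb u (vadd w w') = ipb u w (+) ipb u w'.
Proof. by rewrite ipb_sym ipb_addl !(ipb_sym u). Qed.
Lemma ipb_xx n (u : vec n) : ipb u u = false.
Proof. by rewrite /ipb big1 // => i _; rewrite tr_xx. Qed.
Lemma ipb_0l n (u : vec n) : ipb (vzero n) u = false.
Proof. by rewrite /ipb big1 // => i _; rewrite ffunE tr_0l. Qed.
Lemma ipb_0r n (u : vec n) : ipb u (vzero n) = false.
Proof. by rewrite ipb_sym ipb_0l. Qed.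

Lemma ipb_nondeg n (c : vec n) : c != vzero n -> exists u, ipb u c.
Proof.
move=> cn0.
have [i ci] : exists i, c i != F4zero.
  apply/existsP; apply: contraR cn0; rewrite negb_exists => /forallP h.
  by apply/eqP/ffunP => i; rewrite ffunE; apply/eqP; move: (h i); rewrite negbK.
have [e he] := tr_nondeg ci.
exists [ffun j => if j == i then e else F4zero].
rewrite /ipb (bigD1 i) //= big1 ?ffunE ?eqxx ?addbF // => j /negbTE hj.
by rewrite ffunE hj tr_0l.
Qed.

Lemma in_dual n (C : {set vec n}) u : (u \in dual C) = [forall c in C, ~~ ipb u c].
Proof.
rewrite /dual inE; apply: eq_forallb => c.
by rewrite trace_ipE; case: (ipb u c).
Qed.

Lemma in_dualP n (C : {set vec n}) u : reflect (forall c, c \in C -> ~~ ipb u c) (u \in dual C).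
Proof. by rewrite in_dual; apply: (iffP forall_inP). Qed.

Lemma additive0 n (A : {set vec n}) : Defs.additive A -> vzero n \in A.
Proof. by case/andP. Qed.
Lemma additiveD n (A : {set vec n}) x y : Defs.additive A -> x \in A -> y \in A -> vadd x y \in A.
Proof. by case/andP=> _ /forall_inP h xA yA; move/forall_inP: (h x xA); apply. Qed.
Lemma additiveT n : Defs.additive [set: vec n].
Proof. by apply/andP; split; [rewrite inE | apply/forall_inP => x _; apply/forall_inP => y _; rewrite inE]. Qed.

Lemma card_split (T : finType) (B : {set T}) (P : pred T) :
  #|[set x in B | P x]| + #|[set x in B | ~~ P x]| = #|B|.
Proof.
rewrite -(cardsID [set x | P x] B); congr (_ + _); apply: eq_card => x; by rewrite !inE // andbC.
Qed.

Lemma sum_if (T : finType) (B : {set T}) (P : pred T) a b :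
  \sum_(x in B) (if P x then a else b) =
  #|[set x in B | P x]| * a + #|[set x in B | ~~ P x]| * b.
Proof.
rewrite (bigID P) /=; congr (_ + _).
  rewrite (eq_bigr (fun _ => a)); last by move=> x /andP[_ ->].
  by rewrite -sum_nat_const; apply: eq_bigl => x; rewrite !inE.
rewrite (eq_bigr (fun _ => b)); last by move=> x /andP[_ /negbTE ->].
by rewrite -sum_nat_const; apply: eq_bigl => x; rewrite !inE.
Qed.

Lemma halving n (A : {set vec n}) (f : vec n -> bool) a :
  Defs.additive A -> (forall x y, f (vadd x y) = f x (+) f y) -> a \in A -> f a ->
  2 * #|[set x in A | ~~ f x]| = #|A|.
Proof.
move=> hA hf aA fa.
rewrite -(card_split A f) mul2n -addnn; congr (_ + _).
apply/eqP; rewrite eqn_leq; apply/andP; split.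
  rewrite -(card_imset _ (@vadd_inj n a)); apply: subset_leq_card.
  apply/subsetP => y /imsetP[x]; rewrite !inE => /andP[xA fx] ->.
  by rewrite additiveD // hf fa; move: fx; case: (f x).
rewrite -(card_imset _ (@vadd_inj n a)); apply: subset_leq_card.
apply/subsetP => y /imsetP[x]; rewrite !inE => /andP[xA fx] ->.
by rewrite additiveD // hf fa; move: fx; case: (f x).
Qed.

Lemma card_cond (T : finType) (B : {set T}) (P : pred T) :
  #|[set x in B | P x]| = \sum_(x in B) (P x : nat).
Proof.
rewrite (bigID P) /= [X in _ + X]big1 ?addn0; last by move=> x /andP[_ /negbTE ->].
rewrite (eq_bigr (fun _ => 1)); last by move=> x /andP[_ ->].
by rewrite sum1_card; apply: eq_card => x; rewrite !inE.
Qed.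

From mathcomp Require Import zify.

Lemma card_dual n (A : {set vec n}) :
  Defs.additive A -> #|dual A| * #|A| = #|[set: vec n]|.
Proof.
move=> hA.
set N := #|[set: vec n]|.
have E : \sum_(c in A) #|[set u in [set: vec n] | ~~ ipb u c]| =
         \sum_(u in [set: vec n]) #|[set c in A | ~~ ipb u c]|.
  rewrite (eq_bigr (fun c => \sum_(u in [set: vec n]) (~~ ipb u c : nat))); last first.
    by move=> c _; rewrite card_cond.
  rewrite exchange_big /=; apply: eq_bigr => u _; by rewrite card_cond.
have L : forall c, c \in A ->
    2 * #|[set u in [set: vec n] | ~~ ipb u c]| = if c == vzero n then 2 * N else N.
  move=> c cA; case: eqP => [->|/eqP cn0].
    congr (_ * _); apply: eq_card => u; by rewrite !inE ipb_0r.
  have [u hu] := ipb_nondeg cn0.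
  apply: (halving (f := fun u => ipb u c)) (additiveT n) _ _ hu => //.
  by move=> x y; rewrite ipb_addl.
have R : forall u,
    2 * #|[set c in A | ~~ ipb u c]| = if u \in dual A then 2 * #|A| else #|A|.
  move=> u; case: ifP => [/in_dualP hu|hu].
    congr (_ * _); apply: eq_card => c; rewrite !inE.
    by case cA: (c \in A) => //=; rewrite hu.
  have [c cA hc] : exists2 c, c \in A & ipb u c.
    apply/exists_inP; apply: contraFT hu => h; apply/in_dualP => c cA.
    by apply: contraNN h => hc; apply/exists_inP; exists c.
  apply: (halving (f := fun c => ipb u c)) hA _ cA hc.
  by move=> x y; rewrite ipb_addr.
have := congr1 (muln 2) E.
rewrite !big_distrr /= (eq_bigr _ L) (eq_bigr _ (fun u _ => R u)) !sum_if.
have h1 : #|[set x in A | x == vzero n]| = 1.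
  rewrite -(cards1 (vzero n)); apply: eq_card => x; rewrite !inE.
  by case: eqP => [->|]; rewrite ?additive0 ?andbF.
have h2 := card_split A (fun x => x == vzero n).
have h3 := card_split [set: vec n] (fun u => u \in dual A).
have h4 : [set x in [set: vec n] | x \in dual A] = dual A.
  by apply/setP => x; rewrite !inE.
rewrite h4 in h3 *.
rewrite h1 in h2 *.
rewrite -/N in h3 *.
move: h2 h3; clearbody N.
move: #|[set x in A | x != vzero n]| #|[set x in [set: vec n] | x \notin dual A]| #|dual A| #|A| => z e d a <- <-.
rewrite !mulnDr !mul1n !muln1 => h; nia.
Qed.

Fixpoint span n (s : seq (vec n)) : {set vec n} :=
  if s is c :: s' then span s' :|: [set vadd c x | x in span s'] else [set vzero n].

Lemma mem_span_cons n (c : vec n) s x :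
  (x \in span (c :: s)) = (x \in span s) || (vadd c x \in span s).
Proof.
rewrite /= inE; congr orb; apply/imsetP/idP => [[y ys ->]|h].
  by rewrite vaddK.
by exists (vadd c x); rewrite ?vaddK.
Qed.

Lemma vadd_swap n (c x y : vec n) : vadd c (vadd x y) = vadd x (vadd c y).
Proof. by rewrite !vaddA (vaddC c). Qed.

Lemma span_additive n (s : seq (vec n)) : Defs.additive (span s).
Proof.
elim: s => [|c s IH].
  apply/andP; split; first by rewrite inE.
  by apply/forall_inP => x; rewrite inE => /eqP ->; apply/forall_inP => y; rewrite inE => /eqP ->; rewrite vaddxx inE.
apply/andP; split; first by rewrite mem_span_cons additive0.
apply/forall_inP => x; rewrite mem_span_cons => hx; apply/forall_inP => y; rewrite mem_span_cons => hy.
rewrite mem_span_cons.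
case/orP: hx => hx; case/orP: hy => hy.
- by rewrite (additiveD IH hx hy).
- by rewrite vadd_swap (additiveD IH hx hy) orbT.
- by rewrite vaddA (additiveD IH hx hy) orbT.
- have -> : vadd x y = vadd (vadd c x) (vadd c y).
    by rewrite -vaddA vadd_swap vaddK.
  by rewrite (additiveD IH hx hy).
Qed.

Lemma span_sub n (A : {set vec n}) (s : seq (vec n)) :
  Defs.additive A -> (forall x, x \in s -> x \in A) -> span s \subset A.
Proof.
move=> hA; elim: s => [|c s IH] hs.
  by apply/subsetP => x; rewrite inE => /eqP ->; apply: additive0.
apply/subsetP => x; rewrite mem_span_cons => /orP[] hx.
  by apply: (subsetP (IH _)) hx => y ys; apply: hs; rewrite inE ys orbT.
rewrite -(vaddK c x); apply: additiveD => //; first by apply: hs; rewrite inE eqxx.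
by apply: (subsetP (IH _)) hx => y ys; apply: hs; rewrite inE ys orbT.
Qed.

Lemma span_cons_sub n (c : vec n) s : span s \subset span (c :: s).
Proof. by apply/subsetP => x hx; rewrite mem_span_cons hx. Qed.

Lemma mem_span_self n (s : seq (vec n)) x : x \in s -> x \in span s.
Proof.
elim: s => [|c s IH] //; rewrite inE => /orP[/eqP ->|/IH h].
  by rewrite mem_span_cons vaddxx additive0 ?orbT // span_additive.
by rewrite mem_span_cons h.
Qed.

Lemma card_span_cons n (c : vec n) s :
  c \notin span s -> #|span (c :: s)| = 2 * #|span s|.
Proof.
move=> cs; rewrite /= cardsU card_imset; last exact: vadd_inj.
have -> : span s :&: [set vadd c x | x in span s] = set0.
  apply/setP => x; rewrite inE [in RHS]inE; apply/negbTE; apply/negP => /andP[xs].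
  have -> : (x \in [set vadd c x | x in span s]) = (vadd c x \in span s).
    by apply/imsetP/idP => [[y ys ->]|h]; [rewrite vaddK | exists (vadd c x); rewrite ?vaddK].
  move=> h; have : vadd (vadd c x) x \in span s by rewrite additiveD // span_additive.
  by rewrite -vaddA vaddxx vaddC vadd0 (negbTE cs).
by rewrite cards0 subn0 addnn mul2n.
Qed.

Fixpoint indep n (s : seq (vec n)) : bool :=
  if s is c :: s' then (c \notin span s') && indep s' else true.

Lemma card_span n (s : seq (vec n)) : indep s -> #|span s| = 2 ^ size s.
Proof.
elim: s => [|c s IH] /=; first by rewrite cards1.
by case/andP => h1 h2; rewrite card_span_cons // IH // expnS.
Qed.

Lemma dual_additive n (B : {set vec n}) : Defs.additive (dual B).
Proof.
apply/andP; split.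
  by apply/in_dualP => c _; rewrite ipb_0l.
apply/forall_inP => x /in_dualP hx; apply/forall_inP => y /in_dualP hy.
apply/in_dualP => c cB; rewrite ipb_addl.
by move: (hx c cB) (hy c cB); case: (ipb x c); case: (ipb y c).
Qed.

Lemma dual_anti n (B B' : {set vec n}) : B \subset B' -> dual B' \subset dual B.
Proof.
move=> /subsetP h; apply/subsetP => x /in_dualP hx; apply/in_dualP => c cB.
exact: hx (h _ cB).
Qed.

Lemma span_orth n (l l' : seq (vec n)) :
  (forall x y, x \in l -> y \in l' -> ~~ ipb x y) -> span l \subset dual (span l').
Proof.
move=> h; apply: span_sub; first exact: dual_additive.
move=> x xl; apply/in_dualP => y yl'.
have : y \in dual [set x].
  apply: (subsetP (span_sub (dual_additive [set x]) _)) yl' => z zl'.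
  by apply/in_dualP => w; rewrite inE => /eqP ->; rewrite ipb_sym h.
by move/in_dualP => /(_ x); rewrite inE eqxx ipb_sym => ->.
Qed.

Definition good1 n (v : vec n) (s : seq (vec n)) (c : vec n) : bool :=
  (c \in dual (span (v :: s))) && (c \notin span (v :: s)).

Fixpoint good n (v : vec n) (s : seq (vec n)) : bool :=
  if s is c :: s' then good1 v s' c && good v s' else true.

Lemma good_indep n (v : vec n) s : v != vzero n -> good v s -> indep (v :: s).
Proof.
move=> vn0; elim: s => [|c s IH] /=.
  by rewrite inE vn0.
case/andP=> /andP[_ hc] /IH /= /andP[hv hs].
rewrite hs andbT; apply/andP; split.
  rewrite mem_span_cons negb_or hv /=; apply: contra hc => h.
  by rewrite mem_span_cons vaddC h orbT.
by apply: contra hc => h; rewrite mem_span_cons h.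
Qed.

Lemma good_pair n (v : vec n) s : good v s ->
  forall x y, x \in v :: s -> y \in v :: s -> ~~ ipb x y.
Proof.
elim: s => [|c s IH] /=.
  by move=> _ x y; rewrite !inE => /eqP -> /eqP ->; rewrite ipb_xx.
case/andP=> /andP[hc _] /IH h x y.
have E : forall z, z \in v :: c :: s -> z = c \/ z \in v :: s.
  move=> z; rewrite !in_cons => /orP[->|/orP[/eqP ->|->]]; by [left | right; rewrite ?orbT].
move=> /E [->|hx] /E [->|hy].
- by rewrite ipb_xx.
- by move/in_dualP: hc; apply; apply: mem_span_self.
- by rewrite ipb_sym; move/in_dualP: hc; apply; apply: mem_span_self.
- exact: h.
Qed.

Lemma good_iso n (v : vec n) s : good v s -> span (v :: s) \subset dual (span (v :: s)).
Proof. by move=> g; apply: span_orth; apply: good_pair. Qed.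

Definition Sset n (v : vec n) (m : nat) : {set {set vec n}} :=
  [set C : {set vec n} | [&& Defs.additive C, F2dim_eq C m, self_orthogonal C,
                               v \in dual C & v \notin C]].

Lemma tauE n (v : vec n) k : tau v k = #|Sset v k|.
Proof. by []. Qed.

Lemma good_S n (v : vec n) s : v != vzero n -> good v s -> span s \in Sset v (size s).
Proof.
move=> vn0 g; have /= /andP[hv hi] := good_indep vn0 g.
have iso := good_iso g.
have sub := span_cons_sub v s.
have D := subset_trans iso (dual_anti sub).
rewrite inE span_additive /F2dim_eq card_span // eqxx hv /= andbT.
apply/andP; split; first exact: subset_trans sub D.
by apply: (subsetP D); apply: mem_span_self; rewrite inE eqxx.
Qed.

Fixpoint gcount n (v : vec n) (k : nat) (s : seq (vec n)) {struct k} : nat :=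
  if k is k'.+1 then \sum_(c | good1 v s c) gcount v k' (c :: s) else 1.
Fixpoint hcount n (C : {set vec n}) (k : nat) (s : seq (vec n)) {struct k} : nat :=
  if k is k'.+1 then \sum_(c in C | c \notin span s) hcount C k' (c :: s) else 1.

Lemma step_equiv n (v : vec n) s C M c :
  C \in Sset v M -> span s \subset C ->
  (good1 v s c && (span (c :: s) \subset C)) = (c \in C) && (c \notin span s).
Proof.
rewrite inE => /and5P[hA _ hso hv hvC] hsC.
apply/andP/andP => [[/andP[_ hc] hcs]|[cC cs]].
  split; first by apply: (subsetP hcs); apply: mem_span_self; rewrite inE eqxx.
  by apply: contra hc; apply: (subsetP (span_cons_sub v s)).
have sC : forall y, y \in s -> y \in C.
  by move=> y ys; apply: (subsetP hsC); apply: mem_span_self.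
split; last first.
  apply: span_sub => // y; rewrite in_cons => /orP[/eqP ->|]; [done | exact: sC].
rewrite /good1; apply/andP; split; last first.
  rewrite mem_span_cons negb_or cs /=; apply: contra hvC => h.
  rewrite -(vaddK c v) vaddC; apply: additiveD => //.
  by apply: (subsetP hsC); rewrite vaddC.
have sub : span (v :: s) \subset dual [set c].
  apply: span_sub; first exact: dual_additive.
  move=> y; rewrite in_cons => /orP[/eqP ->|ys].
    by apply/in_dualP => z; rewrite inE => /eqP ->; move/in_dualP: hv; apply.
  apply/in_dualP => z; rewrite inE => /eqP ->.
  by move/subsetP: hso => /(_ y (sC y ys)) /in_dualP; apply.
apply/in_dualP => y /(subsetP sub) /in_dualP /(_ c).
by rewrite inE eqxx ipb_sym => ->.
Qed.

Lemma main_count n (v : vec n) : v != vzero n -> forall k s, good v s ->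
  gcount v k s = \sum_(C in Sset v (size s + k) | span s \subset C) hcount C k s.
Proof.
move=> vn0; elim=> [|k IH] s gs /=.
  rewrite addn0 (eq_bigl (pred1 (span s))) ?big_pred1_eq // => C /=.
  apply/andP/eqP => [[hC hsC]|->]; last by rewrite good_S // subxx.
  apply/eqP; rewrite eq_sym eqEcard hsC /=.
  move: hC; rewrite inE => /and5P[_ /eqP -> _ _ _].
  by rewrite card_span //; case/andP: (good_indep vn0 gs).
rewrite (eq_bigr (fun c => \sum_(C in Sset v (size s + k.+1) | span (c :: s) \subset C) hcount C k (c :: s))); last first.
  by move=> c hc; rewrite IH /= ?addSnnS // hc gs.
rewrite (exchange_big_dep (fun C => (C \in Sset v (size s + k.+1)) && (span s \subset C))) /=; last first.
  by move=> c C _ /andP[-> h]; exact: subset_trans (span_cons_sub c s) h.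
apply: eq_bigr => C /andP[hC hsC]; apply: eq_bigl => c.
by rewrite hC /= (step_equiv c hC hsC).
Qed.

Lemma sum_cond_const (T : finType) (P : pred T) a :
  \sum_(x | P x) a = #|[set x | P x]| * a.
Proof. by rewrite -sum_nat_const; apply: eq_bigl => x; rewrite inE. Qed.

Lemma sum_in_cond_const (T : finType) (B : {set T}) (P : pred T) a :
  \sum_(x in B | P x) a = #|[set x in B | P x]| * a.
Proof. by rewrite -sum_nat_const; apply: eq_bigl => x; rewrite inE. Qed.

Lemma hcount_val n (C : {set vec n}) k : forall s m,
  Defs.additive C -> #|C| = 2 ^ (m + k) -> indep s -> size s = m -> span s \subset C ->
  hcount C k s = \prod_(i < k) (2 ^ (m + k) - 2 ^ (m + i)).
Proof.
elim: k => [|k IH] s m hA hC hi hs hsC /=; first by rewrite big_ord0.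
rewrite (eq_bigr (fun _ => \prod_(i < k) (2 ^ (m + k.+1) - 2 ^ (m + i.+1)))); last first.
  move=> c /andP[cC cs].
  have hcs : span (c :: s) \subset C.
    apply: span_sub => // y; rewrite in_cons => /orP[/eqP -> //|ys].
    by apply: (subsetP hsC); apply: mem_span_self.
  rewrite (IH (c :: s) m.+1 hA) ?hcs //=; last 3 first.
  - by rewrite addSnnS.
  - by apply/andP.
  - by rewrite hs.
  rewrite addSnnS; apply: eq_bigr => i _; by rewrite addSnnS.
rewrite sum_in_cond_const big_ord_recl addn0; congr (_ * _).
have := card_split C (fun x => x \in span s).
have -> : [set x in C | x \in span s] = span s.
  by apply/setP => x; rewrite inE; case xs: (x \in span s); rewrite ?andbF ?andbT ?(subsetP hsC).
rewrite card_span // hs -hC => <-; by rewrite addKn.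
Qed.

Lemma pow2_eq d e f : d * 2 ^ e = 2 ^ f -> d = 2 ^ (f - e).
Proof.
move=> h.
have ef : e <= f.
  case: d h => [|d] h; first by move: (expn_gt0 2 f); rewrite -h.
  by rewrite -(leq_exp2l _ _ (isT : 1 < 2)) -h leq_pmull.
move: h; rewrite -(subnK ef) expnD subnK // => /eqP.
by rewrite eqn_pmul2r ?expn_gt0 // => /eqP.
Qed.

Lemma card_vec n : #|[set: vec n]| = 2 ^ (2 * n).
Proof. by rewrite cardsT card_ffun card_prod card_bool card_ord expnM. Qed.

Lemma gcount_val n (v : vec n) k : v != vzero n -> forall s m,
  good v s -> size s = m ->
  gcount v k s = \prod_(i < k) (2 ^ (2 * n - (m + i).+1) - 2 ^ (m + i).+1).
Proof.
move=> vn0; elim: k => [|k IH] s m gs hs /=; first by rewrite big_ord0.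
rewrite (eq_bigr (fun _ => \prod_(i < k) (2 ^ (2 * n - (m + i.+1).+1) - 2 ^ (m + i.+1).+1))); last first.
  move=> c hc; rewrite (IH (c :: s) m.+1) /= ?hc ?gs ?hs //.
  by apply: eq_bigr => i _; rewrite addSnnS.
rewrite sum_cond_const big_ord_recl addn0; congr (_ * _).
set W := span (v :: s).
have cW : #|W| = 2 ^ m.+1 by rewrite card_span ?good_indep //= hs.
have cD : #|dual W| = 2 ^ (2 * n - m.+1).
  by apply: pow2_eq; rewrite -cW card_dual ?span_additive // card_vec.
have -> : [set c | good1 v s c] = dual W :\: W.
  by apply/setP => x; rewrite in_setD in_set /good1 -/W andbC.
rewrite cardsD (setIidPr (good_iso gs)) cD cW //.
Qed.

Lemma nat_identity n (v : vec n) k : v != vzero n ->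
  tau v k * \prod_(i < k) (2 ^ k - 2 ^ i) =
  \prod_(i < k) (2 ^ (2 * n - i.+1) - 2 ^ i.+1).
Proof.
move=> vn0.
have M : gcount v k [::] = \sum_(C in Sset v k | span [::] \subset C) hcount C k [::]
  := @main_count n v vn0 k [::] isT.
rewrite (@gcount_val n v k vn0 [::] 0 isT erefl) in M.
rewrite tauE M (eq_bigr (fun _ => \prod_(i < k) (2 ^ (0 + k) - 2 ^ (0 + i)))); last first.
  move=> C /andP[hC hs]; apply: hcount_val => //.
    by move: hC; rewrite inE => /and5P[].
  by move: hC; rewrite inE => /and5P[_ /eqP -> _ _ _].
rewrite sum_in_cond_const; congr (_ * _).
apply: eq_card => C; rewrite inE; case hC: (C \in Sset v k) => //=.
rewrite sub1set; move: hC; rewrite inE => /and5P[hA _ _ _ _].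
by rewrite additive0.
Qed.

Import Num.Theory.
From mathcomp Require Import zify ring.
Local Open Scope ring_scope.

Lemma natr_sub2 (a b : nat) : (a <= b)%N -> ((2 ^ b - 2 ^ a)%N%:R : rat) = 2 ^+ a * (2 ^+ (b - a) - 1).
Proof.
move=> ab; rewrite natrB ?leq_exp2l // !natrX mulrBr mulr1 -exprD subnKC //.
Qed.

Lemma pow_sub1_neq0 (i : nat) : (2 ^+ i.+1 - 1 : rat) != 0.
Proof.
have h : (1 <= 2 ^ i.+1)%N by rewrite expn_gt0.
have -> : (2 ^+ i.+1 - 1 : rat) = (2 ^ i.+1 - 1)%N%:R by rewrite natrB // natrX.
rewrite pnatr_eq0 subn_eq0 -ltnNge.
by rewrite -{1}(expn0 2) ltn_exp2l.
Qed.

Theorem lemmaA3 (n : nat) (v : vec n) (k : nat) :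
  v != vzero n -> (1 <= k)%N -> (k <= n.-1)%N ->
  ((tau v k)%:R : rat) =
    2 ^+ k * \prod_(1 <= i < k.+1) ((2 ^+ (2 * (n - i)) - 1) / (2 ^+ i - 1)).
Proof.
move=> vn0 k1 kn.
have M := congr1 (fun x => x%:R : rat) (nat_identity k vn0).
rewrite /= natrM !natr_prod in M.
rewrite (eq_bigr (fun i : 'I_k => 2 ^+ i * (2 ^+ (k - i) - 1))) in M; last first.
  by move=> i _; rewrite natr_sub2 // ltnW.
rewrite [X in _ = X](eq_bigr (fun i : 'I_k => 2 ^+ i.+1 * (2 ^+ (2 * (n - i.+1)) - 1))) in M; last first.
  move=> i _; rewrite natr_sub2; last first.
    have := ltn_ord i; move: kn; lia.
  congr (_ * (_ ^+ _ - _)); have := ltn_ord i; move: kn; lia.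
rewrite !big_split /= in M.
rewrite [X in _ * (_ * X) = _](reindex_inj rev_ord_inj) /= in M.
rewrite [X in _ * (_ * X) = _](eq_bigr (fun i : 'I_k => 2 ^+ i.+1 - 1)) in M; last first.
  by move=> i _; rewrite subKn.
rewrite big_add1 /= big_mkord prodf_div.
have P0 : \prod_(i < k) (2 ^+ i : rat) != 0.
  by rewrite prodf_seq_neq0; apply/allP => i _; rewrite expf_neq0.
have Q0 : \prod_(i < k) (2 ^+ i.+1 - 1 : rat) != 0.
  by rewrite prodf_seq_neq0; apply/allP => i _; rewrite pow_sub1_neq0.
have E : \prod_(i < k) (2 ^+ i.+1 : rat) = 2 ^+ k * \prod_(i < k) 2 ^+ i.
  rewrite (eq_bigr (fun i : 'I_k => 2 * 2 ^+ i)); last by move=> i _; rewrite exprS.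
  by rewrite big_split /= prodr_const card_ord.
rewrite E in M.
set P := \prod_(i < k) (2 ^+ i : rat) in P0 M *.
set Q := \prod_(i < k) (2 ^+ i.+1 - 1 : rat) in Q0 M *.
set R := \prod_(i < k) (2 ^+ (2 * (n - i.+1)) - 1 : rat) in M *.
have -> : (tau v k)%:R = (2 ^+ k * P * R) / (P * Q) :> rat.
  by rewrite -M mulfK // mulf_neq0.
by field; apply/andP; split.
Qed.
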